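(* Fix $\eta>0$ and $K\ge1$. Let $\hat\lambda$ be the output of the randomized message passing procedure run for $K$ iterations with the EMP update and block distribution uniform over $\{(e,i):e\in E,i\in e\}$. Then $$\mathbb{E}\sum_{e\in E,i\in e}\|S^{\hat\lambda}_{e,i}-\mu^{\hat\lambda}_i\|_1^2\le\frac{8m\eta\,(L(0)-\inf_\lambda L(\lambda))}{K}.$$
   Context: Let $G=(V,E)$ be a finite undirected graph with $n=|V|$, $m=|E|$, every vertex incident to at least one edge; $N_i=\{e\in E:i\in e\}$. $\chi$ is a finite label set with $d=|\chi|\ge2$. Costs $C_i\in\mathbb{R}^\chi$, $C_e\in\mathbb{R}^{\chi^2}$; for $e=\{i,j\}$, $x_e=(x_i,x_j)$, $(x_e)_i=x_i$. Dual variables $\lambda=(\lambda_{e,i}(x))\in\mathbb{R}^{2md}$ and $$L(\lambda)=\frac1\eta\sum_{i\in V}\log\sum_{x\in\chi}\exp\Big(-\eta C_i(x)+\eta\sum_{e\in N_i}\lambda_{e,i}(x)\Big)+\frac1\eta\sum_{e\in E}\log\sum_{x_e\in\chi^2}\exp\Big(-\eta C_e(x_e)-\eta\sum_{i\in e}\lambda_{e,i}((x_e)_i)\Big).$$ $\mu^\lambda_i$, $\mu^\lambda_e$ are the normalized distributions proportional to the exponentials inside the two sums; $S^\lambda_{e,i}(x)=\sum_{x_e:(x_e)_i=x}\mu^\lambda_e(x_e)$; slack $\nu^\lambda_{e,i}=S^\lambda_{e,i}-\mu^\lambda_i$. EMP update at block $(e,i)$: replace $\lambda_{e,i}(x)$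 by $\lambda_{e,i}(x)+\frac{1}{2\eta}\log(S^\lambda_{e,i}(x)/\mu^\lambda_i(x))$, other coordinates unchanged. Randomized message passing procedure: $\lambda^{(0)}=0$; for $k=0,\dots,K-1$, sample a block $b_k$ independently from the given distribution and let $\lambda^{(k+1)}$ be $\lambda^{(k)}$ with block $b_k$ updated by the update rule evaluated at $\lambda^{(k)}$; output $\hat\lambda\in\arg\min_{\lambda\in\{\lambda^{(0)},\dots,\lambda^{(K)}\}}\sum_{e\in E,i\in e}\|\nu^\lambda_{e,i}\|_1^2$. *)

(* Defs.v *)
From HB Require Import structures.
From mathcomp Require Import all_boot all_order all_algebra.
From mathcomp Require Import all_classical all_reals.
From mathcomp Require Import topology normedtype sequences exp.

Set Implicit Arguments.
Unset Strict Implicit.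
Unset Printing Implicit Defensive.
Import Order.TTheory GRing.Theory Num.Theory.
Local Open Scope ring_scope.

(* Graph encoding: vertices V : finType, edges E : finType, each edge e has
   two endpoints [endp e false] and [endp e true] (an arbitrary but fixed
   orientation used only to identify chi^2 with label pairs (x_i, x_j)).
   A block (e,i) with i in e is encoded as (e, b) with i = endp e b. *)

Section EMP.
Variables (R : realType) (V E X : finType).
Variable endp : E -> bool -> V.
Variable CV : V -> X -> R.
Variable CE : E -> X * X -> R.
Variable eta : R.

Local Notation block := (E * bool)%type.
Definition dual := block -> X -> R.

Definition bvert (b : block) : V := endp b.1 b.2.

Definition proj (b : bool) (xe : X * X) : X := if b then xe.2 else xe.1.

Definition vexp (l : dual) (i : V) (x : X) : R :=
  - eta * CV i x + eta * \sum_(b : block | bvert b == i) l b x.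

Definition eexp (l : dual) (e : E) (xe : X * X) : R :=
  - eta * CE e xe - eta * \sum_(c : bool) l (e, c) (proj c xe).

Definition Ldual (l : dual) : R :=
  eta^-1 * \sum_(i : V) ln (\sum_(x : X) expR (vexp l i x))
  + eta^-1 * \sum_(e : E) ln (\sum_(xe : X * X) expR (eexp l e xe)).

Definition muV (l : dual) (i : V) (x : X) : R :=
  expR (vexp l i x) / \sum_(y : X) expR (vexp l i y).

Definition muE (l : dual) (e : E) (xe : X * X) : R :=
  expR (eexp l e xe) / \sum_(ye : X * X) expR (eexp l e ye).

Definition Smarg (l : dual) (b : block) (x : X) : R :=
  \sum_(xe : X * X | proj b.2 xe == x) muE l b.1 xe.

Definition slack (l : dual) (b : block) (x : X) : R :=
  Smarg l b x - muV l (bvert b) x.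

Definition slack_obj (l : dual) : R :=
  \sum_(b : block) (\sum_(x : X) `|slack l b x|) ^+ 2.

Definition emp_update (l : dual) (b : block) : dual :=
  fun c x => if c == b then
               l b x + (2 * eta)^-1 * ln (Smarg l b x / muV l (bvert b) x)
             else l c x.

Definition dual0 : dual := fun _ _ => 0.

Definition iterate (bs : seq block) (k : nat) : dual :=
  foldl emp_update dual0 (take k bs).

End EMP.

(* Main.v *)
Require Import Defs.
From HB Require Import structures.
From mathcomp Require Import all_boot all_order all_algebra.
From mathcomp Require Import all_classical all_reals.
From mathcomp Require Import topology normedtype sequences exp.
From mathcomp Require Import ring lra.
Import Order.TTheory GRing.Theory Num.Theory.
Local Open Scope ring_scope.

Lemma cs_w (R : realType) (X : finType) (w a b : X -> R) :
  (forall x, 0 <= w x) ->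
  (\sum_x w x * a x * b x) ^+ 2 <=
  (\sum_x w x * a x ^+ 2) * (\sum_x w x * b x ^+ 2).
Proof.
move=> w0.
set A := \sum_x w x * a x ^+ 2; set C := \sum_x w x * b x ^+ 2.
set P := \sum_x w x * a x * b x.
have A0 : 0 <= A by apply: sumr_ge0 => x _; rewrite mulr_ge0 // sqr_ge0.
have C0 : 0 <= C by apply: sumr_ge0 => x _; rewrite mulr_ge0 // sqr_ge0.
have [Ae|Ane] := eqVneq A 0.
  have P0 : P = 0.
    rewrite /P big1 // => x _.
    have /eqP := Ae; rewrite psumr_eq0 => [/allP /(_ x (mem_index_enum x))|y _].
      rewrite implyTb mulf_eq0 => /orP[/eqP->|]; first by rewrite !mul0r.
      by rewrite expf_eq0 /= => /eqP->; rewrite mulr0 mul0r.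
    by rewrite mulr_ge0 // sqr_ge0.
  by rewrite P0 Ae expr0n /= mul0r.
have Apos : 0 < A by rewrite lt_def Ane A0.
set t := P / A.
have tA : t * A = P by rewrite /t divfK.
have H : 0 <= t ^+ 2 * A - 2 * t * P + C.
  have -> : t ^+ 2 * A - 2 * t * P + C = \sum_x w x * (t * a x - b x) ^+ 2.
    rewrite /A /C /P mulr_sumr mulr_sumr -sumrB -big_split /=.
    by apply: eq_bigr => x _; ring.
  by apply: sumr_ge0 => x _; rewrite mulr_ge0 // sqr_ge0.
rewrite -tA in H *.
have H2 := mulr_ge0 A0 H.
suff -> : A * C = (t * A) ^+ 2 + A * (t ^+ 2 * A - 2 * t * (t * A) + C).
  by rewrite lerDl.
ring.
Qed.

Set Implicit Arguments.
Unset Strict Implicit.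
Unset Printing Implicit Defensive.


Definition dlt (R : realType) (V E X : finType) (endp : E -> bool -> V)
  (CV : V -> X -> R) (CE : E -> X * X -> R) (eta : R) (l : dual R E X)
  (b : E * bool) (x : X) : R :=
  (2 * eta)^-1 * ln (Smarg CE eta l b x / muV endp CV eta l (bvert endp b) x).

Lemma upd_eq (R : realType) (V E X : finType) (endp : E -> bool -> V)
  (CV : V -> X -> R) (CE : E -> X * X -> R) (eta : R) (l : dual R E X) b c x :
  emp_update endp CV CE eta l b c x =
  l c x + (if c == b then dlt endp CV CE eta l b x else 0).
Proof. by rewrite /emp_update /dlt; case: eqP => [->|]; rewrite ?addr0. Qed.

Lemma vexp_upd (R : realType) (V E X : finType) (endp : E -> bool -> V)
  (CV : V -> X -> R) (CE : E -> X * X -> R) (eta : R) (l : dual R E X) b i x :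
  vexp endp CV eta (emp_update endp CV CE eta l b) i x =
  vexp endp CV eta l i x +
  (if bvert endp b == i then eta * dlt endp CV CE eta l b x else 0).
Proof.
rewrite /vexp.
have -> : \sum_(c | bvert endp c == i) emp_update endp CV CE eta l b c x =
   \sum_(c | bvert endp c == i) l c x +
   \sum_(c | bvert endp c == i) (if c == b then dlt endp CV CE eta l b x else 0).
  by rewrite -big_split /=; apply: eq_bigr => c _; rewrite upd_eq.
have -> : \sum_(c | bvert endp c == i)
     (if c == b then dlt endp CV CE eta l b x else 0) =
     (if bvert endp b == i then dlt endp CV CE eta l b x else 0).
  rewrite -big_mkcondr /=; case: eqP => [<-|ne].
    by rewrite (big_pred1 b) // => c /=; case: (c =P b) => [->|]; rewrite ?eqxx ?andbF ?andbT.
  by rewrite big_pred0 // => c; case: (c =P b) => [->|]; rewrite ?andbT ?andbF //; apply/eqP.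
by case: eqP; rewrite ?mulr0 ?addr0 // mulrDr addrA.
Qed.

Lemma eexp_upd (R : realType) (V E X : finType) (endp : E -> bool -> V)
  (CV : V -> X -> R) (CE : E -> X * X -> R) (eta : R) (l : dual R E X) b e xe :
  eexp CE eta (emp_update endp CV CE eta l b) e xe =
  eexp CE eta l e xe -
  (if b.1 == e then eta * dlt endp CV CE eta l b (Defs.proj b.2 xe) else 0).
Proof.
rewrite /eexp.
have -> : \sum_(c : bool) emp_update endp CV CE eta l b (e, c) (Defs.proj c xe) =
   \sum_(c : bool) l (e, c) (Defs.proj c xe) +
   \sum_(c : bool) (if (e, c) == b then dlt endp CV CE eta l b (Defs.proj c xe) else 0).
  by rewrite -big_split /=; apply: eq_bigr => c _; rewrite upd_eq.
case: b => e0 c0 /=.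
have -> : \sum_(c : bool) (if (e, c) == (e0, c0) then
      dlt endp CV CE eta l (e0, c0) (Defs.proj c xe) else 0) =
   (if e0 == e then dlt endp CV CE eta l (e0, c0) (Defs.proj c0 xe) else 0).
  case: eqP => [<-|ne].
    rewrite (bigD1 c0) //= eqxx big1 => [|c /negbTE nc]; first by rewrite addr0.
    by rewrite xpair_eqE eqxx nc.
  by rewrite big1 // => c _; rewrite xpair_eqE; case: eqP => // e0e; case: ne.
by case: eqP; rewrite ?mulr0 ?addr0 ?subr0 // mulrDr opprD addrA.
Qed.


Lemma sum_gt0_pt (R : realType) (I : finType) (F : I -> R) (i : I) :
  (forall j, 0 < F j) -> 0 < \sum_j F j.
Proof.
move=> Fp; rewrite (bigD1 i) //= ltr_wpDr // ?Fp //.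
by apply: sumr_ge0 => j _; exact/ltW.
Qed.


Lemma muV_gt0 (R : realType) (V E X : finType) (endp : E -> bool -> V)
  (CV : V -> X -> R) (eta : R) (l : dual R E X) i x :
  0 < muV endp CV eta l i x.
Proof. by rewrite /muV divr_gt0 ?expR_gt0 // (sum_gt0_pt x) // => y; exact: expR_gt0. Qed.

Lemma muE_gt0 (R : realType) (E X : finType)
  (CE : E -> X * X -> R) (eta : R) (l : dual R E X) e xe :
  0 < muE CE eta l e xe.
Proof. by rewrite /muE divr_gt0 ?expR_gt0 // (sum_gt0_pt xe) // => y; exact: expR_gt0. Qed.

Lemma muV_sum (R : realType) (V E X : finType) (endp : E -> bool -> V)
  (CV : V -> X -> R) (eta : R) (l : dual R E X) i (x : X) :
  \sum_y muV endp CV eta l i y = 1.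
Proof.
rewrite /muV -mulr_suml divff //; apply: lt0r_neq0.
by rewrite (sum_gt0_pt x) // => y; exact: expR_gt0.
Qed.

Lemma muE_sum (R : realType) (E X : finType)
  (CE : E -> X * X -> R) (eta : R) (l : dual R E X) e (xe : X * X) :
  \sum_y muE CE eta l e y = 1.
Proof.
rewrite /muE -mulr_suml divff //; apply: lt0r_neq0.
by rewrite (sum_gt0_pt xe) // => y; exact: expR_gt0.
Qed.

Lemma Smarg_gt0 (R : realType) (E X : finType)
  (CE : E -> X * X -> R) (eta : R) (l : dual R E X) b x :
  0 < Smarg CE eta l b x.
Proof.
rewrite /Smarg (bigD1 (x, x)) /=; last by case: b.2.
rewrite ltr_wpDr ?muE_gt0 //; apply: sumr_ge0 => y _; exact/ltW/muE_gt0.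
Qed.

Lemma Smarg_sum (R : realType) (E X : finType)
  (CE : E -> X * X -> R) (eta : R) (l : dual R E X) b (x : X) :
  \sum_y Smarg CE eta l b y = 1.
Proof.
rewrite -(muE_sum CE eta l b.1 (x, x)) (partition_big (Defs.proj b.2) xpredT) //.
Qed.

Lemma sum_proj (R : realType) (X : finType) c (F : X * X -> R) (G : X -> R) :
  \sum_xe F xe / G (Defs.proj c xe) =
  \sum_x (\sum_(xe | Defs.proj c xe == x) F xe) / G x.
Proof.
rewrite (partition_big (Defs.proj c) xpredT) //; apply: eq_bigr => x _.
by rewrite mulr_suml; apply: eq_bigr => xe /eqP ->.
Qed.


Definition uu (R : realType) (V E X : finType) (endp : E -> bool -> V)
  (CV : V -> X -> R) (CE : E -> X * X -> R) (eta : R) (l : dual R E X)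
  (b : E * bool) (x : X) : R := expR (eta * dlt endp CV CE eta l b x).

Lemma uu_sq (R : realType) (V E X : finType) (endp : E -> bool -> V)
  (CV : V -> X -> R) (CE : E -> X * X -> R) (eta : R) (l : dual R E X) b x :
  0 < eta ->
  muV endp CV eta l (bvert endp b) x * uu endp CV CE eta l b x ^+ 2 =
  Smarg CE eta l b x.
Proof.
move=> eta0; rewrite /uu -expRM_natr.
have -> : eta * dlt endp CV CE eta l b x * 2%:R =
    ln (Smarg CE eta l b x / muV endp CV eta l (bvert endp b) x).
  rewrite /dlt; field; exact: lt0r_neq0.
rewrite lnK ?posrE; last by rewrite divr_gt0 ?Smarg_gt0 ?muV_gt0.
by rewrite mulrC divfK //; exact/lt0r_neq0/muV_gt0.
Qed.

Lemma Zv_upd (R : realType) (V E X : finType) (endp : E -> bool -> V)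
  (CV : V -> X -> R) (CE : E -> X * X -> R) (eta : R) (l : dual R E X) b i (x0 : X) :
  \sum_x expR (vexp endp CV eta (emp_update endp CV CE eta l b) i x) =
  (\sum_x expR (vexp endp CV eta l i x)) *
  (if bvert endp b == i then
     \sum_x muV endp CV eta l (bvert endp b) x * uu endp CV CE eta l b x
   else 1).
Proof.
under eq_bigr do rewrite vexp_upd expRD.
case: eqP => [<-|_]; last by under eq_bigr do rewrite expR0 mulr1; rewrite mulr1.
rewrite mulr_sumr; apply: eq_bigr => x _.
rewrite /muV /uu; field; apply: lt0r_neq0.
by rewrite (sum_gt0_pt x0) // => y; exact: expR_gt0.
Qed.

Lemma Ze_upd (R : realType) (V E X : finType) (endp : E -> bool -> V)
  (CV : V -> X -> R) (CE : E -> X * X -> R) (eta : R) (l : dual R E X) b e (x0 : X) :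
  0 < eta ->
  \sum_xe expR (eexp CE eta (emp_update endp CV CE eta l b) e xe) =
  (\sum_xe expR (eexp CE eta l e xe)) *
  (if b.1 == e then
     \sum_x muV endp CV eta l (bvert endp b) x * uu endp CV CE eta l b x
   else 1).
Proof.
move=> eta0.
under eq_bigr do rewrite eexp_upd expRD.
case: eqP => [<-|_]; last by under eq_bigr do rewrite oppr0 expR0 mulr1; rewrite mulr1.
have Z0 : \sum_xe expR (eexp CE eta l b.1 xe) != 0.
  by apply: lt0r_neq0; rewrite (sum_gt0_pt (x0, x0)) // => y; exact: expR_gt0.
have -> : \sum_xe expR (eexp CE eta l b.1 xe) *
       expR (- (eta * dlt endp CV CE eta l b (Defs.proj b.2 xe))) =
   (\sum_xe expR (eexp CE eta l b.1 xe)) *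
   \sum_xe muE CE eta l b.1 xe / uu endp CV CE eta l b (Defs.proj b.2 xe).
  rewrite mulr_sumr; apply: eq_bigr => xe _.
  rewrite expRN /muE /uu; field; apply/andP; split => //.
  exact/lt0r_neq0/expR_gt0.
congr (_ * _); rewrite sum_proj; apply: eq_bigr => x _.
rewrite -/(Smarg CE eta l b x) -(uu_sq endp CV) //.
have : uu endp CV CE eta l b x != 0 by exact/lt0r_neq0/expR_gt0.
by move=> u0; field.
Qed.


Lemma sum_ln_ind (R : realType) (I : finType) (a : I) (B : R) :
  \sum_i ln (if a == i then B else 1) = ln B.
Proof.
rewrite (bigD1 a) //= eqxx big1 ?addr0 // => i ne.
by rewrite eq_sym (negbTE ne) ln1.
Qed.

Lemma Ldual_upd (R : realType) (V E X : finType) (endp : E -> bool -> V)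
  (CV : V -> X -> R) (CE : E -> X * X -> R) (eta : R) (l : dual R E X) b (x0 : X) :
  0 < eta ->
  Ldual endp CV CE eta (emp_update endp CV CE eta l b) =
  Ldual endp CV CE eta l + 2 * eta^-1 *
   ln (\sum_x muV endp CV eta l (bvert endp b) x * uu endp CV CE eta l b x).
Proof.
move=> eta0.
set B := \sum_x _.
have B0 : 0 < B.
  rewrite (sum_gt0_pt x0) // => x; rewrite mulr_gt0 ?muV_gt0 //; exact: expR_gt0.
have e1 : forall i, ln (\sum_x expR (vexp endp CV eta (emp_update endp CV CE eta l b) i x)) =
   ln (\sum_x expR (vexp endp CV eta l i x)) + ln (if bvert endp b == i then B else 1).
  move=> i; rewrite (Zv_upd endp CV CE eta l b i x0).
  rewrite -/B lnM // posrE; last by case: ifP.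
  by apply: (sum_gt0_pt x0) => y; exact: expR_gt0.
have e2 : forall e, ln (\sum_xe expR (eexp CE eta (emp_update endp CV CE eta l b) e xe)) =
   ln (\sum_xe expR (eexp CE eta l e xe)) + ln (if b.1 == e then B else 1).
  move=> e; rewrite (Ze_upd endp CV CE l b e x0 eta0).
  rewrite -/B lnM // posrE; last by case: ifP.
  by apply: (sum_gt0_pt (x0, x0)) => y; exact: expR_gt0.
rewrite /Ldual.
under eq_bigr do rewrite e1.
under [in X in _ + _ * X]eq_bigr do rewrite e2.
rewrite !big_split /= !sum_ln_ind.
move: (\sum_i ln _) (\sum_i ln _) => s1 s2.
rewrite mulr_natl mulr2n; ring.
Qed.



Lemma descent (R : realType) (V E X : finType) (endp : E -> bool -> V)
  (CV : V -> X -> R) (CE : E -> X * X -> R) (eta : R) (l : dual R E X) b (x0 : X) :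
  0 < eta ->
  (\sum_x `|slack endp CV CE eta l b x|) ^+ 2 <=
  4 * eta * (Ldual endp CV CE eta l -
             Ldual endp CV CE eta (emp_update endp CV CE eta l b)).
Proof.
move=> eta0.
rewrite (Ldual_upd endp CV CE l b x0 eta0).
set L := Ldual _ _ _ _ _.
set mu := muV endp CV eta l (bvert endp b).
set u := uu endp CV CE eta l b.
set B := \sum_x mu x * u x.
have B0 : 0 < B.
  rewrite (sum_gt0_pt x0) // => x; rewrite mulr_gt0 ?muV_gt0 //; exact: expR_gt0.
have -> : 4 * eta * (L - (L + 2 * eta^-1 * ln B)) = - 8 * ln B.
  by field; exact: lt0r_neq0.
have lnB : ln B <= B - 1.
  have := @le_ln1Dx R (B - 1); rewrite addrCA subrr addr0; apply; lra.
have mu0 : forall x, 0 < mu x by move=> x; exact: muV_gt0.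
have u0 : forall x, 0 < u x by move=> x; exact: expR_gt0.
have Su : forall x, Smarg CE eta l b x = mu x * u x ^+ 2.
  by move=> x; rewrite (uu_sq endp CV CE l b x eta0).
have slackE : forall x, `|slack endp CV CE eta l b x| = mu x * `|u x - 1| * (u x + 1).
  move=> x; rewrite /slack Su -/mu.
  have -> : mu x * u x ^+ 2 - mu x = mu x * (u x - 1) * (u x + 1) by ring.
  rewrite normrM [`|mu x * _|]normrM (gtr0_norm (mu0 x)) (gtr0_norm (_ : 0 < u x + 1)) //.
  by apply: ltr_wpDl; [exact/ltW|].
under eq_bigr do rewrite slackE.
have Hcs := @cs_w R X mu (fun x => `|u x - 1|) (fun x => u x + 1) (fun x => ltW (mu0 x)).
have S1 : \sum_x mu x * u x ^+ 2 = 1.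
  by rewrite -(Smarg_sum CE eta l b x0); apply: eq_bigr => x _; rewrite Su.
have M1 : \sum_x mu x = 1 by rewrite /mu (muV_sum _ _ _ _ _ x0).
have A1 : \sum_x mu x * `|u x - 1| ^+ 2 = 2 - 2 * B.
  have -> : \sum_x mu x * `|u x - 1| ^+ 2 =
     \sum_x mu x * u x ^+ 2 - 2 * \sum_x mu x * u x + \sum_x mu x.
    rewrite mulr_sumr -sumrB -big_split /=; apply: eq_bigr => x _.
    rewrite real_normK ?num_real //; ring.
  by rewrite S1 M1 -/B; ring.
have C1 : \sum_x mu x * (u x + 1) ^+ 2 = 2 + 2 * B.
  have -> : \sum_x mu x * (u x + 1) ^+ 2 =
     \sum_x mu x * u x ^+ 2 + 2 * \sum_x mu x * u x + \sum_x mu x.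
    rewrite mulr_sumr -!big_split /=; apply: eq_bigr => x _; ring.
  by rewrite S1 M1 -/B; ring.
rewrite A1 C1 in Hcs.
apply: (le_trans Hcs); nra.
Qed.


Lemma lse_lb (R : realType) (I : finType) (a : I -> R) (i0 : I) :
  ln (#|I|%:R) + (#|I|%:R)^-1 * \sum_i a i <= ln (\sum_i expR (a i)).
Proof.
have N0 : 0 < (#|I|%:R : R) by rewrite ltr0n; apply/card_gt0P; exists i0.
set m := (#|I|%:R)^-1 * \sum_i a i.
have H : expR m * #|I|%:R <= \sum_i expR (a i).
  have -> : \sum_i expR (a i) = expR m * \sum_i expR (a i - m).
    rewrite mulr_sumr; apply: eq_bigr => i _; rewrite -expRD; congr expR; ring.
  rewrite ler_wpM2l ?(ltW (expR_gt0 _)) //.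
  have -> : (#|I|%:R : R) = \sum_i (1 + (a i - m)).
    rewrite big_split /= sumrB !sumr_const -mulr_natr /m.
    rewrite [X in _ *+ X](_ : _ = #|I|); last exact: eq_card.
    rewrite -mulr_natr; field; exact: lt0r_neq0.
  by apply: ler_sum => i _; exact: expR_ge1Dx.
rewrite -(ler_ln _ _) ?posrE ?mulr_gt0 ?expR_gt0 // in H; last first.
  by apply: (sum_gt0_pt i0) => i; exact: expR_gt0.
by rewrite lnM ?posrE ?expR_gt0 // expRK addrC in H.
Qed.

Lemma vsum (R : realType) (V E X : finType) (endp : E -> bool -> V)
  (CV : V -> X -> R) (eta : R) (l : dual R E X) :
  \sum_i \sum_x vexp endp CV eta l i x =
  - eta * \sum_i \sum_x CV i x + eta * \sum_b \sum_x l b x.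
Proof.
rewrite /vexp.
under eq_bigr do rewrite big_split /=.
rewrite big_split /= !mulr_sumr; congr (_ + _).
  by apply: eq_bigr => i _; rewrite mulr_sumr.
rewrite (partition_big (bvert endp) xpredT) //=; apply: eq_bigr => i _.
rewrite -mulr_sumr exchange_big /= mulr_sumr; apply: eq_bigr => x _.
by rewrite mulr_sumr.
Qed.

Lemma sum_cst (R : realType) (X : finType) (c : R) :
  \sum_(x : X) c = #|X|%:R * c.
Proof.
by rewrite sumr_const mulr_natl; congr (_ *+ _); apply: eq_card.
Qed.

Lemma sum_projc (R : realType) (X : finType) c (g : X -> R) :
  \sum_(xe : X * X) g (Defs.proj c xe) = #|X|%:R * \sum_x g x.
Proof.
rewrite -(pair_bigA _ (fun x y => g (Defs.proj c (x, y)))) /=.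
case: c => /=.
  by rewrite exchange_big mulr_sumr; apply: eq_bigr => y _; rewrite sum_cst.
by rewrite mulr_sumr; apply: eq_bigr => x _; rewrite sum_cst.
Qed.

Lemma esum (R : realType) (E X : finType)
  (CE : E -> X * X -> R) (eta : R) (l : dual R E X) :
  \sum_e \sum_xe eexp CE eta l e xe =
  - eta * \sum_e \sum_xe CE e xe - eta * (#|X|%:R * \sum_b \sum_x l b x).
Proof.
rewrite /eexp.
under eq_bigr do rewrite sumrB.
rewrite sumrB !mulr_sumr; congr (_ - _).
  by apply: eq_bigr => e _; rewrite mulr_sumr.
rewrite [RHS](_ : _ = \sum_e \sum_c eta * (#|X|%:R * \sum_x l (e, c) x)); last first.
  by rewrite pair_bigA; apply: eq_bigr => -[e c].
apply: eq_bigr => e _.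
rewrite -!mulr_sumr exchange_big /=.
rewrite [in RHS]mulr_sumr; congr (_ * _); apply: eq_bigr => c _.
by rewrite (sum_projc c (l (e, c))).
Qed.

Definition lbL (R : realType) (V E X : finType) (endp : E -> bool -> V)
  (CV : V -> X -> R) (CE : E -> X * X -> R) (eta : R) (l : dual R E X) : R :=
  eta^-1 * \sum_i (ln (#|X|%:R) + (#|X|%:R)^-1 * \sum_x vexp endp CV eta l i x)
  + eta^-1 * \sum_e (ln (#|{: X * X}|%:R) + (#|{: X * X}|%:R)^-1 * \sum_xe eexp CE eta l e xe).

Lemma lbL_le (R : realType) (V E X : finType) (endp : E -> bool -> V)
  (CV : V -> X -> R) (CE : E -> X * X -> R) (eta : R) (l : dual R E X) (x0 : X) :
  0 < eta -> lbL endp CV CE eta l <= Ldual endp CV CE eta l.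
Proof.
move=> eta0; rewrite /lbL /Ldual.
have ei : 0 <= eta^-1 by rewrite invr_ge0 ltW.
apply: lerD; rewrite ler_wpM2l //; apply: ler_sum => i _.
  exact: (lse_lb _ x0).
exact: (lse_lb _ (x0, x0)).
Qed.

Lemma lbL_const (R : realType) (V E X : finType) (endp : E -> bool -> V)
  (CV : V -> X -> R) (CE : E -> X * X -> R) (eta : R) (l : dual R E X) (x0 : X) :
  0 < eta -> lbL endp CV CE eta l = lbL endp CV CE eta (@dual0 R E X).
Proof.
move=> eta0; rewrite /lbL !big_split /= -!mulr_sumr !vsum !esum.
have -> : \sum_b \sum_x (@dual0 R E X) b x = 0 by rewrite big1 // => b _; rewrite big1.
rewrite card_prod natrM.
have d0 : (#|X|%:R : R) != 0 by rewrite pnatr_eq0 -lt0n; apply/card_gt0P; exists x0.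
field; rewrite d0 /=; exact: lt0r_neq0.
Qed.


Lemma step (R : realType) (V E X : finType) (endp : E -> bool -> V)
  (CV : V -> X -> R) (CE : E -> X * X -> R) (eta : R) (l : dual R E X) (x0 : X) :
  0 < eta ->
  slack_obj endp CV CE eta l <=
  4 * eta * (#|{: E * bool}|%:R * Ldual endp CV CE eta l -
             \sum_b Ldual endp CV CE eta (emp_update endp CV CE eta l b)).
Proof.
move=> eta0; rewrite /slack_obj.
apply: le_trans (ler_sum _ (fun b _ => descent endp CV CE l b x0 eta0)) _.
by rewrite -mulr_sumr sumrB sum_cst.
Qed.

Lemma sum_tuple_cons (R : realType) (T : finType) n (F : n.+1.-tuple T -> R) :
  \sum_t F t = \sum_x \sum_(t : n.-tuple T) F [tuple of x :: t].
Proof.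
rewrite pair_bigA /=.
rewrite (reindex (fun p : T * n.-tuple T => [tuple of p.1 :: p.2])) //=.
exists (fun t : n.+1.-tuple T => (thead t, [tuple of behead t])).
  by move=> [x t] _ /=; congr (_, _); apply: val_inj.
by move=> t _ /=; rewrite -tuple_eta.
Qed.

Lemma main_ind (R : realType) (V E X : finType) (endp : E -> bool -> V)
  (CV : V -> X -> R) (CE : E -> X * X -> R) (eta : R) (x0 : X) :
  0 < eta -> forall (K : nat) (l : dual R E X),
  \sum_(bs : K.-tuple (E * bool)) \sum_(k < K)
     slack_obj endp CV CE eta (foldl (emp_update endp CV CE eta) l (take k bs))
  <= 4 * eta * #|{: E * bool}|%:R *
     (#|{: E * bool}|%:R ^+ K * Ldual endp CV CE eta l -
      \sum_(bs : K.-tuple (E * bool))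
         Ldual endp CV CE eta (foldl (emp_update endp CV CE eta) l bs)).
Proof.
move=> eta0; set N : R := #|{: E * bool}|%:R.
have N0 : 0 <= N by rewrite /N ler0n.
elim=> [|K IH] l.
  rewrite big1 => [|bs _]; last by rewrite big_ord0.
  have -> : \sum_(bs : 0.-tuple (E * bool))
       Ldual endp CV CE eta (foldl (emp_update endp CV CE eta) l bs) =
       \sum_(bs : 0.-tuple (E * bool)) Ldual endp CV CE eta l.
    by apply: eq_bigr => bs _; rewrite (tuple0 bs).
  by rewrite sum_cst card_tuple expr0 expn0 mul1r subrr mulr0.
rewrite !sum_tuple_cons.
under eq_bigr do under eq_bigr do rewrite big_ord_recl /=.
under eq_bigr do rewrite big_split /= sum_cst card_tuple.
set L := Ldual endp CV CE eta l.
set F := slack_obj endp CV CE eta l.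
have H1 : forall b, (#|{: E * bool}| ^ K)%:R * F +
      \sum_(t : K.-tuple (E * bool)) \sum_(k < K)
         slack_obj endp CV CE eta
              (foldl (emp_update endp CV CE eta)
                 (emp_update endp CV CE eta l b) (take (0 + k) t)) <=
     N ^+ K * F + 4 * eta * N *
     (N ^+ K * Ldual endp CV CE eta (emp_update endp CV CE eta l b) -
      \sum_(t : K.-tuple (E * bool))
         Ldual endp CV CE eta (foldl (emp_update endp CV CE eta) (emp_update endp CV CE eta l b) t)).
  move=> b; rewrite natrX lerD2l.
  under eq_bigr do under eq_bigr do rewrite add0n.
  exact: IH.
apply: (le_trans (ler_sum _ (fun b _ => H1 b))).

rewrite big_split /= sum_cst -mulr_sumr sumrB -mulr_sumr -natrX -/N.
have Hs := step endp CV CE l x0 eta0; rewrite -/N -/L -/F in Hs.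
set S1 := \sum_b Ldual endp CV CE eta (emp_update endp CV CE eta l b).
set SH := \sum_b \sum_t _.
have NK0 : 0 <= N ^+ K by rewrite exprn_ge0.
have H2 := ler_wpM2l (mulr_ge0 N0 NK0) Hs.
rewrite exprS natrX -/N -subr_ge0.
set P := N ^+ K.
have -> : 4 * eta * N * (N * P * L - SH) - (N * (P * F) + 4 * eta * N * (P * S1 - SH)) =
   N * P * (4 * eta * (N * L - S1)) - N * P * F by ring.
by rewrite subr_ge0.
Qed.

Unset Implicit Arguments.
Set Strict Implicit.

Theorem lemma8 (R : realType) (V E X : finType) (endp : E -> bool -> V)
  (CV : V -> X -> R) (CE : E -> X * X -> R) (eta : R) (K : nat)
  (Hloop : forall e, endp e false != endp e true)
  (Hsimple : forall e f, [set endp e false; endp e true]%SET = [set endp f false; endp f true]%SET :> {set V} -> e = f)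
  (Hinc : forall i : V, exists e b, endp e b = i)
  (HX : (2 <= #|X|)%N)
  (Heta : 0 < eta) (HK : (1 <= K)%N)
  (sel : K.-tuple (E * bool) -> 'I_K.+1)
  (Hsel : forall (bs : K.-tuple (E * bool)) (k : 'I_K.+1),
      slack_obj endp CV CE eta (iterate endp CV CE eta bs (sel bs))
      <= slack_obj endp CV CE eta (iterate endp CV CE eta bs k)) :
  (#|{: E * bool}| ^ K)%:R^-1 *
    \sum_(bs : K.-tuple (E * bool))
       slack_obj endp CV CE eta (iterate endp CV CE eta bs (sel bs))
  <= 8 * #|E|%:R * eta *
       (Ldual endp CV CE eta (@dual0 R E X)
        - inf (range (Ldual endp CV CE eta))) / K%:R.
Proof.
have /card_gt0P [x0 _] : (0 < #|X|)%N by apply: leq_trans HX.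
set N : R := #|{: E * bool}|%:R.
set L0 := Ldual endp CV CE eta (@dual0 R E X).
set I := inf (range (Ldual endp CV CE eta)).
set S := \sum_(bs : K.-tuple (E * bool)) _.
have infle : forall l, I <= Ldual endp CV CE eta l.
  move=> l; apply: ge_inf; last by exists l.
  exists (lbL endp CV CE eta (@dual0 R E X)) => _ [l' _ <-].
  by rewrite -(lbL_const endp CV CE l' x0 Heta) (lbL_le endp CV CE l' x0 Heta).
have H1 : K%:R * S <= \sum_(bs : K.-tuple (E * bool)) \sum_(k < K)
     slack_obj endp CV CE eta (foldl (emp_update endp CV CE eta) (@dual0 R E X) (take k bs)).
  rewrite /S mulr_sumr; apply: ler_sum => bs _.
  rewrite (_ : K%:R * _ = \sum_(k < K) slack_obj endp CV CE eta (iterate endp CV CE eta bs (sel bs))); last by rewrite sum_cst card_ord.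
  apply: ler_sum => k _.
  exact: (Hsel bs (widen_ord (leqnSn K) k)).
have H2 := @main_ind R V E X endp CV CE eta x0 Heta K (@dual0 R E X).
have H3 : N ^+ K * I <= \sum_(bs : K.-tuple (E * bool))
     Ldual endp CV CE eta (foldl (emp_update endp CV CE eta) (@dual0 R E X) bs).
  rewrite -natrX -card_tuple -sum_cst; apply: ler_sum => bs _; exact: infle.
rewrite -/N -/L0 in H2.
have HS : K%:R * S <= 4 * eta * N * N ^+ K * (L0 - I).
  apply: (le_trans H1); apply: (le_trans H2).
  rewrite -[X in _ <= X]mulrA ler_wpM2l ?mulr_ge0 ?ler0n ?(ltW Heta) //.
  by rewrite mulrBr; apply: lerB.
have Kp : 0 < (K%:R : R) by rewrite ltr0n.
have NE : N = 2 * #|E|%:R by rewrite /N card_prod card_bool natrM mulrC.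
have [E0|Ep] := eqVneq #|E| 0%N.
  rewrite card_prod E0 mul0n exp0n // invr0 mul0r.
  by rewrite mulr0 !mul0r.
have Pp : 0 < N ^+ K.
  by rewrite exprn_gt0 // NE mulr_gt0 // ltr0n lt0n.
rewrite natrX -/N.
rewrite -(ler_pM2r (mulr_gt0 Kp Pp)).
have -> : (N ^+ K)^-1 * S * (K%:R * N ^+ K) = K%:R * S.
  by field; exact: lt0r_neq0.
have -> : 8 * #|E|%:R * eta * (L0 - I) / K%:R * (K%:R * N ^+ K) =
    4 * eta * N * N ^+ K * (L0 - I).
  by rewrite NE; field; exact: lt0r_neq0.
exact: HS.
Qed.
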